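(* Let $\xi_1,\xi_2,\dots$ be i.i.d. integer-valued random variables with $\mathbb E\xi_1<0$, and suppose $\mathbb E e^{\beta\xi_1}=1$ for some $\beta>0$. Let $\xi^{(\beta)}_1,\xi^{(\beta)}_2,\dots$ be i.i.d. with $\mathbb P\{\xi^{(\beta)}_k=j\}=e^{\beta j}\mathbb P\{\xi_1=j\}$, $j\in\mathbb Z$, and $S^{(\beta)}_0=0$, $S^{(\beta)}_n=\sum_{k=1}^n\xi^{(\beta)}_k$. Define $$f(i):=e^{\beta i}\,\mathbb P\Big\{\min_{n\ge0}S^{(\beta)}_n\ge -i\Big\},\qquad i\in\mathbb Z_+.$$ Then $f$ is harmonic for the random walk killed at leaving $\mathbb Z_+$, i.e. $f(i)=\sum_{j=0}^\infty\mathbb P\{\xi_1=j-i\}f(j)$ for all $i\ge0$; moreover $e^{\beta i}-e^{-\beta}\le f(i)\le e^{\beta i}$ for all $i\ge0$; and $f(i)=\mathbb P\{\tau^{(\beta)}_1=\infty\}\sum_{j=0}^ie^{\beta(i-j)}u(j)$, where $u(j)$ is the renewal mass function of the strict descending ladder heights of $S_n=\sum_{k=1}^n\xi_k$ (i.e. $u(l)=\sum_{k\ge0}\mathbb P\{\chi_1+\dots+\chi_k=l,\ \tau_1<\infty,\dots,\tau_k<\infty\}$ with $(\tau_k,\chi_k)$ the strict descending ladder epochs and heights, heights taken positive) and $\tau^{(\beta)}_1$ is the first strict descending ladder epoch of $S^{(\beta)}_n$. *)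

(* Defs.v *)
From Stdlib Require Import Reals ZArith ClassicalEpsilon.
Open Scope R_scope.

(* Limit of a real sequence (0 if it does not converge). *)
Definition lim_seq (u : nat -> R) : R :=
  match excluded_middle_informative (exists l, Un_cv u l) with
  | left H => proj1_sig (constructive_indefinite_description _ H)
  | right _ => 0
  end.

(* Value of the series sum_{n>=0} u n (0 if divergent). *)
Definition sumN (u : nat -> R) : R := lim_seq (fun n => sum_f_R0 u n).

Definition sumZ (g : Z -> R) : R :=
  sumN (fun n => g (Z.of_nat n)) + sumN (fun n => g (- Z.of_nat (S n))%Z).

Definition has_sumZ (g : Z -> R) (l : R) : Prop :=
  exists a b, infinite_sum (fun n => g (Z.of_nat n)) a /\
              infinite_sum (fun n => g (- Z.of_nat (S n))%Z) b /\ l = a + b.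

(* p is the law of xi_1: p j = P{xi_1 = j}. *)
Definition is_pmf (p : Z -> R) : Prop := (forall j, 0 <= p j) /\ has_sumZ p 1.

(* E xi_1 < 0 in the extended sense: E xi^+ is finite and E xi^+ < E xi^-
   (E xi^- possibly infinite). *)
Definition mean_negative (p : Z -> R) : Prop :=
  exists A, infinite_sum (fun n => INR n * p (Z.of_nat n)) A /\
    forall B, infinite_sum (fun n => INR (S n) * p (- Z.of_nat (S n))%Z) B -> A < B.

Definition tilt (beta : R) (p : Z -> R) (j : Z) : R := exp (beta * IZR j) * p j.

(* stay q N x = P{ x + S_n >= 0 for all 0 <= n <= N }, S the walk with step law q. *)
Fixpoint stay (q : Z -> R) (N : nat) (x : Z) : R :=
  if (0 <=? x)%Z then
    match N with
    | O => 1
    | S N' => sumZ (fun j => q j * stay q N' (x + j)%Z)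
    end
  else 0.

(* P{ min_{n>=0} S_n >= -x } = lim_N P{ min_{0<=n<=N} S_n >= -x }. *)
Definition min_prob (q : Z -> R) (x : Z) : R := lim_seq (fun N => stay q N x).

Definition fbeta (beta : R) (p : Z -> R) (i : nat) : R :=
  exp (beta * INR i) * min_prob (tilt beta p) (Z.of_nat i).

(* P{tau_1 = infinity} for the walk with step law q, tau_1 = min{n>=1 : S_n < 0}:
   = P{S_n >= 0 for all n >= 0}. *)
Definition tau_inf_prob (q : Z -> R) : R := min_prob q 0%Z.

(* first_passage q n x l = P{ x + S_k >= 0 for 0 <= k < n, x + S_n = -l }. *)
Fixpoint first_passage (q : Z -> R) (n : nat) (x l : Z) : R :=
  match n with
  | O => if Z.eqb x (- l) then 1 else 0
  | S n' => if (0 <=? x)%Z then sumZ (fun j => q j * first_passage q n' (x + j)%Z l)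
            else 0
  end.

(* P{ tau_1 < infinity, chi_1 = l } (chi_1 = -S_{tau_1} > 0; mass 0 at l = 0). *)
Definition ladder_height (q : Z -> R) (l : nat) : R :=
  match l with
  | O => 0
  | S _ => sumN (fun n => first_passage q n 0%Z (Z.of_nat l))
  end.

(* ladder_conv q k l = P{ chi_1+...+chi_k = l, tau_1,...,tau_k < infinity }
   (k-fold convolution of the defective ladder height law). *)
Fixpoint ladder_conv (q : Z -> R) (k l : nat) : R :=
  match k with
  | O => if Nat.eqb l 0 then 1 else 0
  | S k' => sum_f_R0 (fun m => ladder_height q m * ladder_conv q k' (l - m)) l
  end.

Definition renewal (q : Z -> R) (l : nat) : R := sumN (fun k => ladder_conv q k l).

(* Main.v *)
Require Import Defs.
From Stdlib Require Import Reals ZArith Lia Lra ClassicalEpsilon FunctionalExtensionality.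
From Coquelicot Require Import Coquelicot.
Open Scope R_scope.

Lemma lim_seq_ok (u : nat -> R) (l : R) : is_lim_seq u l -> lim_seq u = l.
Proof.
  intro H. apply (proj1 (is_lim_seq_Reals u l)) in H. unfold lim_seq.
  destruct excluded_middle_informative as [e|n].
  - destruct constructive_indefinite_description as [l' H']. simpl.
    eapply UL_sequence; eauto.
  - exfalso; apply n; eauto.
Qed.

Lemma lim_seq_none (u : nat -> R) : ~ (exists l : R, is_lim_seq u l) -> lim_seq u = 0.
Proof.
  intro H. unfold lim_seq.
  destruct excluded_middle_informative as [e|n]; auto.
  exfalso; apply H. destruct e as [l Hl]. exists l. now apply (proj2 (is_lim_seq_Reals u l)).
Qed.

Lemma lim_seq_scal (c : R) (u : nat -> R) : lim_seq (fun n => c * u n) = c * lim_seq u.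
Proof.
  destruct (Req_dec c 0) as [Hc|Hc].
  - subst. rewrite Rmult_0_l. apply lim_seq_ok.
    apply (is_lim_seq_ext (fun _ => 0)); [intro n; ring | apply (is_lim_seq_const 0)].
  - destruct (classic (exists l : R, is_lim_seq u l)) as [[l Hl]|Hn].
    + rewrite (lim_seq_ok u l Hl). apply lim_seq_ok.
      apply (is_lim_seq_scal_l u c l Hl).
    + rewrite (lim_seq_none u Hn). rewrite Rmult_0_r. apply lim_seq_none.
      intros [l Hl]. apply Hn. exists (l / c).
      apply (is_lim_seq_ext (fun n => / c * (c * u n))). { intro n. field. auto. }
      replace (l / c) with (/ c * l) by (unfold Rdiv; ring).
      apply (is_lim_seq_scal_l (fun n => c * u n) (/ c) l Hl) .
Qed.

Lemma sumN_ok (u : nat -> R) (l : R) : is_series u l -> sumN u = l.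
Proof.
  intro H. apply (proj1 (is_series_Reals u l)) in H. apply lim_seq_ok. now apply (proj2 (is_lim_seq_Reals _ l)).
Qed.

Lemma sumN_scal c u : sumN (fun n => c * u n) = c * sumN u.
Proof.
  unfold sumN. rewrite <- lim_seq_scal. f_equal. apply functional_extensionality.
  intro n. rewrite (scal_sum u n c). apply sum_eq. intros; ring.
Qed.

Lemma sumZ_scal c g : sumZ (fun j => c * g j) = c * sumZ g.
Proof. unfold sumZ. rewrite !sumN_scal. ring. Qed.

Lemma ser_lim (a : nat -> R) (l : R) : is_series a l -> is_lim_seq (sum_f_R0 a) l.
Proof. intro H. apply (proj2 (is_lim_seq_Reals _ l)). now apply (proj1 (is_series_Reals a l)). Qed.

Lemma lim_ser (a : nat -> R) (l : R) : is_lim_seq (sum_f_R0 a) l -> is_series a l.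
Proof. intro H. apply (proj2 (is_series_Reals a l)). now apply (proj1 (is_lim_seq_Reals _ l)). Qed.

Lemma ser_le (a b : nat -> R) (la lb : R) : (forall n, a n <= b n) ->
  is_series a la -> is_series b lb -> la <= lb.
Proof.
  intros E Ha Hb. apply ser_lim in Ha. apply ser_lim in Hb.
  apply (is_lim_seq_le (sum_f_R0 a) (sum_f_R0 b) la lb); [|exact Ha|exact Hb]. intro n. apply sum_Rle. intros; apply E.
Qed.

Lemma ser_zero : is_series (fun _ : nat => 0) 0.
Proof.
  apply lim_ser. apply (is_lim_seq_ext (fun _ => 0)).
  - intro n. rewrite sum_cte. ring.
  - apply (is_lim_seq_const 0).
Qed.

Definition hsZ (g : Z -> R) (l : R) : Prop :=
  exists a b : R, is_series (fun n => g (Z.of_nat n)) a /\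
              is_series (fun n => g (- Z.of_nat (S n))%Z) b /\ l = a + b.

Lemma hsZ_iff g l : has_sumZ g l <-> hsZ g l.
Proof.
  split; intros [a [b [H1 [H2 H3]]]]; exists a, b;
  repeat split; auto; apply is_series_Reals; auto.
Qed.

Lemma hsZ_sumZ g l : hsZ g l -> sumZ g = l.
Proof.
  intros [a [b [H1 [H2 H3]]]]. unfold sumZ. rewrite (sumN_ok _ _ H1), (sumN_ok _ _ H2). auto.
Qed.

Lemma hsZ_ext f g l : (forall j, f j = g j) -> hsZ f l -> hsZ g l.
Proof.
  intros E [a [b [H1 [H2 H3]]]]. exists a, b. repeat split; auto;
  eapply is_series_ext; try eassumption; intros; simpl; auto.
Qed.

Lemma sumZ_ext f g : (forall j, f j = g j) -> sumZ f = sumZ g.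
Proof. intro E. f_equal. now apply functional_extensionality. Qed.

Lemma hsZ_plus f g a b : hsZ f a -> hsZ g b -> hsZ (fun j => f j + g j) (a + b).
Proof.
  intros [a1 [b1 [H1 [H2 H3]]]] [a2 [b2 [G1 [G2 G3]]]].
  exists (a1 + a2), (b1 + b2). repeat split.
  - apply (is_series_plus _ _ _ _ H1 G1).
  - apply (is_series_plus _ _ _ _ H2 G2).
  - subst; ring.
Qed.

Lemma hsZ_scal c f a : hsZ f a -> hsZ (fun j => c * f j) (c * a).
Proof.
  intros [a1 [b1 [H1 [H2 H3]]]]. exists (c * a1), (c * b1). repeat split.
  - apply (is_series_scal_l c _ _ H1).
  - apply (is_series_scal_l c _ _ H2).
  - subst; ring.
Qed.

Lemma hsZ_zero : hsZ (fun _ => 0) 0.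
Proof.
  exists 0, 0. split; [|split].
  - apply ser_zero.
  - apply ser_zero.
  - rewrite Rplus_0_l; reflexivity.
Qed.

Lemma hsZ_le f g a b : (forall j, f j <= g j) -> hsZ f a -> hsZ g b -> a <= b.
Proof.
  intros E [a1 [b1 [H1 [H2 H3]]]] [a2 [b2 [G1 [G2 G3]]]]. subst.
  assert (a1 <= a2) by (apply (ser_le (fun n => f (Z.of_nat n)) (fun n => g (Z.of_nat n)) a1 a2); auto).
  assert (b1 <= b2) by (apply (ser_le (fun n => f (- Z.of_nat (S n))%Z) (fun n => g (- Z.of_nat (S n))%Z) b1 b2); auto).
  lra.
Qed.

Lemma ex_bnd (c g : nat -> R) (M : R) : (forall n, 0 <= c n) -> ex_series c ->
  (forall n, Rabs (g n) <= M) -> ex_series (fun n => c n * g n).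
Proof.
  intros H0 [l Hl] Hb.
  apply (ex_series_le (fun n => c n * g n) (fun n => M * c n)).
  - intro n. change (norm (c n * g n)) with (Rabs (c n * g n)).
    rewrite Rabs_mult, Rabs_pos_eq by auto. rewrite Rmult_comm.
    apply Rmult_le_compat_r; auto.
  - exists (M * l). apply (is_series_scal_l M c l Hl).
Qed.

Lemma hsZ_bnd (q g : Z -> R) (M : R) : (forall j, 0 <= q j) -> hsZ q 1 ->
  (forall j, Rabs (g j) <= M) -> hsZ (fun j => q j * g j) (sumZ (fun j => q j * g j)).
Proof.
  intros H0 [a [b [H1 [H2 H3]]]] Hb.
  assert (E1 : ex_series (fun n => q (Z.of_nat n) * g (Z.of_nat n)))
    by (apply (ex_bnd _ _ M); auto; exists a; auto).
  assert (E2 : ex_series (fun n => q (- Z.of_nat (S n))%Z * g (- Z.of_nat (S n))%Z))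
    by (apply (ex_bnd _ _ M); auto; exists b; auto).
  apply Series_correct in E1. apply Series_correct in E2.
  assert (hsZ (fun j => q j * g j) (Series (fun n => q (Z.of_nat n) * g (Z.of_nat n)) +
     Series (fun n => q (- Z.of_nat (S n))%Z * g (- Z.of_nat (S n))%Z))) as HH
    by (exists (Series (fun n => q (Z.of_nat n) * g (Z.of_nat n))),
           (Series (fun n => q (- Z.of_nat (S n))%Z * g (- Z.of_nat (S n))%Z)); auto).
  rewrite (hsZ_sumZ _ _ HH). exact HH.
Qed.

Lemma hsZ_01 (q g : Z -> R) : (forall j, 0 <= q j) -> hsZ q 1 ->
  (forall j, 0 <= g j <= 1) ->
  hsZ (fun j => q j * g j) (sumZ (fun j => q j * g j)) /\
  0 <= sumZ (fun j => q j * g j) <= 1.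
Proof.
  intros H0 H1 Hg.
  assert (H := hsZ_bnd q g 1 H0 H1 ltac:(intro j; specialize (Hg j); rewrite Rabs_pos_eq; lra)).
  split; auto. split.
  - apply (hsZ_le (fun _ => 0) (fun j => q j * g j)); auto.
    + intro j; specialize (Hg j); specialize (H0 j); nra.
    + apply hsZ_zero.
  - apply (hsZ_le (fun j => q j * g j) q); auto.
    intro j; specialize (Hg j); specialize (H0 j); nra.
Qed.

Fixpoint fsum (f : nat -> R) (n : nat) : R :=
  match n with O => 0 | S n' => fsum f n' + f n' end.

Lemma fsum_ext f g n : (forall k, (k < n)%nat -> f k = g k) -> fsum f n = fsum g n.
Proof. induction n; simpl; intros; auto. rewrite IHn, H; auto. Qed.

Lemma fsum_plus f g n : fsum (fun k => f k + g k) n = fsum f n + fsum g n.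
Proof. induction n; simpl; [ring|rewrite IHn; ring]. Qed.

Lemma fsum_scal c f n : fsum (fun k => c * f k) n = c * fsum f n.
Proof. induction n; simpl; [ring|rewrite IHn; ring]. Qed.

Lemma fsum_zero n : fsum (fun _ => 0) n = 0.
Proof. induction n; simpl; [ring|rewrite IHn; ring]. Qed.

Lemma fsum_shift f n : fsum f (S n) = f O + fsum (fun k => f (S k)) n.
Proof. induction n; simpl in *; [ring|rewrite IHn; ring]. Qed.

Lemma fsum_sum f n : fsum f (S n) = sum_f_R0 f n.
Proof. induction n; simpl in *; [ring|rewrite <- IHn; simpl; ring]. Qed.

Lemma fsum_swap (F : nat -> nat -> R) n m :
  fsum (fun k => fsum (fun l => F k l) m) n = fsum (fun l => fsum (fun k => F k l) n) m.
Proof.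
  induction n; simpl.
  - rewrite fsum_zero; auto.
  - rewrite IHn, <- fsum_plus. reflexivity.
Qed.

Lemma fsum_le f g n : (forall k, (k < n)%nat -> f k <= g k) -> fsum f n <= fsum g n.
Proof. induction n; simpl; intros; [lra|]. apply Rplus_le_compat; auto. Qed.

Lemma hsZ_fsum (G : nat -> Z -> R) (s : nat -> R) n :
  (forall k, hsZ (G k) (s k)) -> hsZ (fun j => fsum (fun k => G k j) n) (fsum s n).
Proof.
  intro H. induction n; simpl.
  - apply hsZ_zero.
  - apply hsZ_plus; auto.
Qed.

Lemma lim_fsum (U : nat -> nat -> R) (L : nat -> R) n :
  (forall k, is_lim_seq (U k) (L k)) -> is_lim_seq (fun N => fsum (fun k => U k N) n) (fsum L n).
Proof.
  intro H. induction n; simpl.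
  - apply (is_lim_seq_const 0).
  - apply (is_lim_seq_plus' _ _ _ _ IHn (H n)).
Qed.

Lemma stay_neg q N x : (x < 0)%Z -> stay q N x = 0.
Proof. intro H. destruct N; simpl; destruct (Z.leb_spec 0 x); auto; lia. Qed.

Lemma stay_S q N x : (0 <= x)%Z -> stay q (S N) x = sumZ (fun j => q j * stay q N (x + j)).
Proof. intro H. simpl. destruct (Z.leb_spec 0 x); auto; lia. Qed.

Lemma stay_0 q x : (0 <= x)%Z -> stay q O x = 1.
Proof. intro H. simpl. destruct (Z.leb_spec 0 x); auto; lia. Qed.

Lemma stay_01 q : (forall j, 0 <= q j) -> hsZ q 1 -> forall N x, 0 <= stay q N x <= 1.
Proof.
  intros H0 H1 N. induction N; intro x.
  - destruct (Z.leb_spec 0 x). rewrite stay_0; auto; lra. rewrite stay_neg; auto; lra.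
  - destruct (Z.leb_spec 0 x). rewrite stay_S; auto.
    apply (hsZ_01 q (fun j => stay q N (x + j)) H0 H1); auto.
    rewrite stay_neg; auto; lra.
Qed.

Lemma stay_hs q : (forall j, 0 <= q j) -> hsZ q 1 -> forall N x,
  hsZ (fun j => q j * stay q N (x + j)) (sumZ (fun j => q j * stay q N (x + j))).
Proof.
  intros H0 H1 N x. apply (hsZ_01 q (fun j => stay q N (x + j)) H0 H1).
  intro; apply stay_01; auto.
Qed.

Lemma stay_dec q : (forall j, 0 <= q j) -> hsZ q 1 -> forall N x, stay q (S N) x <= stay q N x.
Proof.
  intros H0 H1 N. induction N; intro x.
  - destruct (stay_01 q H0 H1 1 x). destruct (Z.leb_spec 0 x).
    rewrite stay_0; auto. rewrite !stay_neg; auto; lra.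
  - destruct (Z.leb_spec 0 x).
    + rewrite !(stay_S q _ x); auto.
      apply (hsZ_le _ _ _ _ (fun j => Rmult_le_compat_l _ _ _ (H0 j) (IHN (x + j)%Z)));
        apply stay_hs; auto.
    + rewrite !stay_neg; auto; lra.
Qed.

Lemma min_prob_lim q : (forall j, 0 <= q j) -> hsZ q 1 -> forall x,
  is_lim_seq (fun N => stay q N x) (min_prob q x).
Proof.
  intros H0 H1 x.
  destruct (ex_finite_lim_seq_decr (fun N => stay q N x) 0) as [l Hl].
  - intro; apply stay_dec; auto.
  - intro; apply stay_01; auto.
  - unfold min_prob. rewrite (lim_seq_ok _ l Hl). auto.
Qed.

Lemma min_prob_01 q : (forall j, 0 <= q j) -> hsZ q 1 -> forall x, 0 <= min_prob q x <= 1.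
Proof.
  intros H0 H1 x. assert (H := min_prob_lim q H0 H1 x). split.
  - apply (is_lim_seq_le (fun _ => 0) (fun N => stay q N x) 0 (min_prob q x)); auto.
    intro; apply stay_01; auto. apply is_lim_seq_const.
  - apply (is_lim_seq_le (fun N => stay q N x) (fun _ => 1) (min_prob q x) 1); auto.
    intro; apply stay_01; auto. apply is_lim_seq_const.
Qed.

Lemma min_prob_le q : (forall j, 0 <= q j) -> hsZ q 1 -> forall N x, min_prob q x <= stay q N x.
Proof.
  intros H0 H1 N x. apply (is_lim_seq_decr_compare (fun N => stay q N x)).
  apply min_prob_lim; auto. intro; apply stay_dec; auto.
Qed.

Lemma exp_ge1 x : 0 <= x -> 1 <= exp x.
Proof. intro H. rewrite <- exp_0. destruct H. left; apply exp_increasing; auto. subst; lra. Qed.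

Lemma exit_bound (p : Z -> R) beta : (forall j, 0 <= p j) -> hsZ p 1 -> 0 < beta ->
  hsZ (tilt beta p) 1 ->
  forall N y, 1 - stay (tilt beta p) N y <= exp (- beta * (IZR y + 1)).
Proof.
  intros P0 P1 Hb Q1.
  set (q := tilt beta p).
  assert (Q0 : forall j, 0 <= q j). { intro j. unfold q, tilt. apply Rmult_le_pos; auto. left; apply exp_pos. }
  induction N; intro y.
  - destruct (Z.leb_spec 0 y).
    + rewrite stay_0; auto. assert (0 < exp (- beta * (IZR y + 1))) by apply exp_pos. lra.
    + rewrite stay_neg; auto. apply Z.lt_le_pred in H. simpl in H.
      apply IZR_le in H. rewrite Rminus_0_r. apply exp_ge1. nra.
  - destruct (Z.leb_spec 0 y).
    + rewrite stay_S; auto.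
      assert (HS := stay_hs q Q0 Q1 N y).
      assert (HD := hsZ_plus _ _ _ _ Q1 (hsZ_scal (-1) _ _ HS)).
      assert (HE := hsZ_scal (exp (- beta * (IZR y + 1))) _ _ P1).
      replace (exp (- beta * (IZR y + 1))) with (exp (- beta * (IZR y + 1)) * 1) by ring.
      replace (1 - sumZ (fun j => q j * stay q N (y + j))) with
        (1 + -1 * sumZ (fun j => q j * stay q N (y + j))) by ring.
      refine (hsZ_le _ _ _ _ _ HD HE).
      intro j. cbv beta. fold q. specialize (IHN (y + j)%Z).
      assert (q j * (1 - stay q N (y + j)) <= q j * exp (- beta * (IZR (y + j) + 1)))
        by (apply Rmult_le_compat_l; auto).
      replace (q j * exp (- beta * (IZR (y + j) + 1))) with
        (exp (- beta * (IZR y + 1)) * p j) in H0.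
      lra.
      unfold q, tilt. rewrite plus_IZR.
      replace (- beta * (IZR y + IZR j + 1)) with (- beta * (IZR y + 1) + - (beta * IZR j)) by ring.
      rewrite exp_plus, exp_Ropp. field. apply Rgt_not_eq, exp_pos.
    + rewrite stay_neg; auto. apply Z.lt_le_pred in H. simpl in H.
      apply IZR_le in H. rewrite Rminus_0_r. apply exp_ge1. nra.
Qed.

Lemma fp_neg q n x l : (x < 0)%Z -> first_passage q (S n) x l = 0.
Proof. intro H. simpl. destruct (Z.leb_spec 0 x); auto; lia. Qed.

Lemma fp_S q n x l : (0 <= x)%Z -> first_passage q (S n) x l = sumZ (fun j => q j * first_passage q n (x + j) l).
Proof. intro H. simpl. destruct (Z.leb_spec 0 x); auto; lia. Qed.

Lemma fp_01 q : (forall j, 0 <= q j) -> hsZ q 1 -> forall n x l, 0 <= first_passage q n x l <= 1.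
Proof.
  intros H0 H1 n. induction n; intros x l.
  - simpl. destruct (Z.eqb x (- l)); lra.
  - destruct (Z.leb_spec 0 x).
    + rewrite fp_S; auto. apply (hsZ_01 q (fun j => first_passage q n (x + j) l) H0 H1); auto.
    + rewrite fp_neg; auto; lra.
Qed.

Lemma fp_hs q : (forall j, 0 <= q j) -> hsZ q 1 -> forall n x l,
  hsZ (fun j => q j * first_passage q n (x + j) l) (sumZ (fun j => q j * first_passage q n (x + j) l)).
Proof.
  intros H0 H1 n x l. apply (hsZ_01 q (fun j => first_passage q n (x + j) l) H0 H1).
  intro; apply fp_01; auto.
Qed.

Lemma fp_sum_le q : (forall j, 0 <= q j) -> hsZ q 1 -> forall l, (0 < l)%Z ->
  forall N x, fsum (fun n => first_passage q n x l) N <= 1.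
Proof.
  intros H0 H1 l Hl N. induction N; intro x.
  - simpl; lra.
  - rewrite fsum_shift. destruct (Z.leb_spec 0 x).
    + replace (first_passage q 0 x l) with 0 by (simpl; destruct (Z.eqb_spec x (-l)); auto; lia).
      rewrite Rplus_0_l.
      rewrite (fsum_ext _ (fun n => sumZ (fun j => q j * first_passage q n (x + j) l)))
        by (intros; apply fp_S; auto).
      assert (HH := hsZ_fsum (fun k j => q j * first_passage q k (x + j) l) _ N
               (fun k => fp_hs q H0 H1 k x l)).
      refine (hsZ_le _ _ _ _ _ HH H1).
      intro j. cbv beta. rewrite fsum_scal.
      rewrite <- (Rmult_1_r (q j)) at 2. apply Rmult_le_compat_l; auto.
    + rewrite (fsum_ext _ (fun _ => 0)) by (intros; apply fp_neg; auto).
      rewrite fsum_zero. destruct (fp_01 q H0 H1 0 x l). lra.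
Qed.

Lemma ladder_ser q : (forall j, 0 <= q j) -> hsZ q 1 -> forall L,
  is_series (fun n => first_passage q n 0 (Z.of_nat (S L))) (ladder_height q (S L)).
Proof.
  intros H0 H1 L.
  destruct (ex_finite_lim_seq_incr (sum_f_R0 (fun n => first_passage q n 0 (Z.of_nat (S L)))) 1)
    as [a Ha].
  - intro n. rewrite tech5. assert (H := fp_01 q H0 H1 (S n) 0 (Z.of_nat (S L))). lra.
  - intro n. rewrite <- fsum_sum. apply fp_sum_le; auto. lia.
  - apply lim_ser in Ha. unfold ladder_height. rewrite (sumN_ok _ _ Ha). auto.
Qed.

Definition Tk q N x i := fsum (fun n => fsum (fun l =>
   first_passage q n x (Z.of_nat (S l)) * stay q (N - n) (Z.of_nat i - Z.of_nat (S l))) i) (S N).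

Lemma fsum_single f k n : (forall l, l <> k -> f l = 0) ->
  fsum f n = if Nat.ltb k n then f k else 0.
Proof.
  intro H. induction n; simpl; auto.
  rewrite IHn. destruct (Nat.ltb_spec k n); destruct (Nat.ltb_spec k (S n)); try lia.
  - rewrite (H n); [ring|lia].
  - assert (k = n) by lia. subst. ring.
  - rewrite (H n); [ring|lia].
Qed.

Lemma fp_0_pos q x l : (0 <= x)%Z -> (0 < l)%Z -> first_passage q 0 x l = 0.
Proof. intros. simpl. destruct (Z.eqb_spec x (-l)); auto; lia. Qed.

Lemma keyG_neg q i N x : (x < 0)%Z ->
  stay q N (x + Z.of_nat i) = stay q N x + Tk q N x i.
Proof.
  intro Hx. rewrite (stay_neg q N x Hx), Rplus_0_l. unfold Tk. rewrite fsum_shift.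
  rewrite (fsum_ext (fun k => fsum _ i) (fun _ => 0)).
  2:{ intros n _. rewrite (fsum_ext _ (fun _ => 0)). apply fsum_zero.
      intros. rewrite fp_neg; auto; ring. }
  rewrite fsum_zero, Rplus_0_r, Nat.sub_0_r.
  set (k := Z.to_nat (- x - 1)).
  assert (Ek : x = (- Z.of_nat (S k))%Z) by (unfold k; rewrite Nat2Z.inj_succ, Z2Nat.id; lia).
  rewrite (fsum_single _ k).
  2:{ intros l Hl. cbn [first_passage]. destruct (Z.eqb_spec x (- Z.of_nat (S l))); [|ring].
      exfalso. apply Hl. rewrite Ek in e. lia. }
  cbn [first_passage]. destruct (Z.eqb_spec x (- Z.of_nat (S k))); [|lia].
  destruct (Nat.ltb_spec k i).
  - rewrite Rmult_1_l. f_equal. lia.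
  - rewrite stay_neg; auto. lia.
Qed.

Lemma keyG q : (forall j, 0 <= q j) -> hsZ q 1 -> forall i N x,
  stay q N (x + Z.of_nat i) = stay q N x + Tk q N x i.
Proof.
  intros H0 H1 i N. induction N; intro x.
  - destruct (Z.leb_spec 0 x).
    + unfold Tk. rewrite fsum_shift. cbn [fsum].
      rewrite (fsum_ext _ (fun _ => 0)) by (intros; rewrite fp_0_pos; auto; [ring|lia]).
      rewrite fsum_zero, !stay_0 by lia. ring.
    + apply keyG_neg; auto.
  - destruct (Z.leb_spec 0 x).
    + rewrite (stay_S q N (x + Z.of_nat i)) by lia. rewrite (stay_S q N x) by lia.
      rewrite (sumZ_ext _ (fun j => q j * stay q N (x + j) + q j * Tk q N (x + j) i)).
      2:{ intro j. rewrite <- Rmult_plus_distr_l, <- IHN.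
          replace (x + Z.of_nat i + j)%Z with (x + j + Z.of_nat i)%Z by lia. reflexivity. }
      assert (HS := stay_hs q H0 H1 N x).
      assert (E : Tk q (S N) x i = fsum (fun n => fsum (fun l =>
        sumZ (fun j => q j * first_passage q n (x + j) (Z.of_nat (S l))) *
        stay q (N - n) (Z.of_nat i - Z.of_nat (S l))) i) (S N)).
      { unfold Tk. rewrite fsum_shift.
        rewrite (fsum_ext (fun l => first_passage q 0 x _ * _) (fun _ => 0))
          by (intros; rewrite fp_0_pos; auto; [ring|lia]).
        rewrite fsum_zero, Rplus_0_l. apply fsum_ext. intros n _. apply fsum_ext. intros l _.
        rewrite fp_S; auto. }
      assert (HT : hsZ (fun j => q j * Tk q N (x + j) i) (Tk q (S N) x i)).
      { rewrite E.
        apply (hsZ_ext (fun j => fsum (fun n => fsum (fun l =>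
           stay q (N - n) (Z.of_nat i - Z.of_nat (S l)) *
           (q j * first_passage q n (x + j) (Z.of_nat (S l)))) i) (S N))).
        { intro j. unfold Tk. rewrite <- fsum_scal. apply fsum_ext; intros.
          rewrite <- fsum_scal. apply fsum_ext; intros. ring. }
        apply (hsZ_fsum (fun n j => fsum (fun l =>
           stay q (N - n) (Z.of_nat i - Z.of_nat (S l)) *
           (q j * first_passage q n (x + j) (Z.of_nat (S l)))) i)).
        intro n.
        apply (hsZ_fsum (fun l j => stay q (N - n) (Z.of_nat i - Z.of_nat (S l)) *
           (q j * first_passage q n (x + j) (Z.of_nat (S l))))).
        intro l. rewrite Rmult_comm. apply hsZ_scal. apply fp_hs; auto. }
      rewrite (hsZ_sumZ _ _ (hsZ_plus _ _ _ _ HS HT)). reflexivity.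
    + apply keyG_neg; auto.
Qed.

Lemma conv_lim (a b : nat -> R) (A B : R) : (forall n, 0 <= a n) -> is_series a A ->
  (forall n, b (S n) <= b n) -> is_lim_seq b B ->
  is_lim_seq (fun N => sum_f_R0 (fun k => a k * b (N - k)%nat) N) (A * B).
Proof.
  intros Ha0 Ha Hd Hb.
  set (c := fun n => match n with O => b O | S m => b (S m) - b m end).
  assert (Sc : forall N, sum_f_R0 c N = b N).
  { induction N; simpl; auto. rewrite IHN. simpl. ring. }
  assert (Hc : is_series c B).
  { apply lim_ser. apply (is_lim_seq_ext b); [intro n; rewrite Sc; reflexivity | exact Hb]. }
  assert (HbB : forall n, B <= b n) by (apply is_lim_seq_decr_compare; auto).
  assert (Sac : forall N, sum_f_R0 (fun n => Rabs (c n)) N = Rabs (b O) + b O - b N).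
  { induction N; simpl; [ring|]. rewrite IHN. rewrite (Rabs_left1 (b (S N) - b N)) by (specialize (Hd N); lra). ring. }
  assert (Eac : ex_series (fun n => Rabs (c n))).
  { destruct (ex_finite_lim_seq_incr (sum_f_R0 (fun n => Rabs (c n))) (Rabs (b O) + b O - B))
      as [l Hl].
    - intro n. rewrite tech5. assert (0 <= Rabs (c (S n))) by apply Rabs_pos. lra.
    - intro n. rewrite Sac. specialize (HbB n). lra.
    - exists l. apply lim_ser. auto. }
  assert (Eaa : ex_series (fun n => Rabs (a n))).
  { exists A. apply (is_series_ext a); auto. intro n. rewrite Rabs_pos_eq; auto. }
  assert (HM := is_series_mult a c A B Ha Hc Eaa Eac).
  apply ser_lim in HM.
  apply (is_lim_seq_ext (sum_f_R0 (fun n => sum_f_R0 (fun k => a k * c (n - k)%nat) n))); auto.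
  intro N. induction N.
  - simpl. reflexivity.
  - rewrite tech5, IHN. rewrite !tech5.
    assert (E : sum_f_R0 (fun k => a k * c (S N - k)%nat) N =
      sum_f_R0 (fun k => a k * b (S N - k)%nat) N - sum_f_R0 (fun k => a k * b (N - k)%nat) N).
    { rewrite <- minus_sum. apply sum_eq; intros k Hk. rewrite Nat.sub_succ_l by lia. simpl c. ring. }
    rewrite E, !Nat.sub_diag. simpl c. ring.
Qed.

Lemma lim_uniq (u : nat -> R) (a b : R) : is_lim_seq u a -> is_lim_seq u b -> a = b.
Proof.
  intros Ha Hb. apply is_lim_seq_unique in Ha. apply is_lim_seq_unique in Hb.
  rewrite Ha in Hb. injection Hb. auto.
Qed.

Lemma renew_eq q : (forall j, 0 <= q j) -> hsZ q 1 -> forall i : nat,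
  min_prob q (Z.of_nat i) = min_prob q 0 +
   fsum (fun l => ladder_height q (S l) * min_prob q (Z.of_nat i - Z.of_nat (S l))) i.
Proof.
  intros H0 H1 i.
  apply (lim_uniq (fun N => stay q N (Z.of_nat i))).
  - apply min_prob_lim; auto.
  - apply (is_lim_seq_ext (fun N => stay q N 0 + fsum (fun l => sum_f_R0 (fun n =>
        first_passage q n 0 (Z.of_nat (S l)) * stay q (N - n) (Z.of_nat i - Z.of_nat (S l))) N) i)).
    { intro N. rewrite <- (Z.add_0_l (Z.of_nat i)) at 1. rewrite (keyG q H0 H1 i N 0).
      f_equal. unfold Tk. rewrite fsum_swap. apply fsum_ext. intros. symmetry. apply fsum_sum. }
    apply is_lim_seq_plus'. apply min_prob_lim; auto.
    apply (lim_fsum (fun l N => sum_f_R0 (fun n =>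
        first_passage q n 0 (Z.of_nat (S l)) * stay q (N - n) (Z.of_nat i - Z.of_nat (S l))) N)).
    intro l. apply (conv_lim (fun n => first_passage q n 0 (Z.of_nat (S l))) (fun k => stay q k (Z.of_nat i - Z.of_nat (S l)))).
    + intro; apply fp_01; auto.
    + apply ladder_ser; auto.
    + intro; apply stay_dec; auto.
    + apply min_prob_lim; auto.
Qed.

Lemma sum_tail_zero f n N : (forall k, (n < k)%nat -> f k = 0) -> sum_f_R0 f (N + n) = sum_f_R0 f n.
Proof. intro H. induction N; simpl; auto. rewrite IHN, H; [ring|lia]. Qed.

Lemma sum_zero f n : (forall k, (k <= n)%nat -> f k = 0) -> sum_f_R0 f n = 0.
Proof. intro H. induction n; simpl; [apply H; lia|]. rewrite IHn, H; [ring|lia|intros; apply H; lia]. Qed.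

Lemma conv_zero q : forall k l, (l < k)%nat -> ladder_conv q k l = 0.
Proof.
  induction k; intros l Hl; [lia|]. simpl. apply sum_zero. intros m Hm.
  destruct m. simpl ladder_height. ring.
  rewrite IHk; [ring|lia].
Qed.

Lemma renewal_fin q l : renewal q l = sum_f_R0 (fun k => ladder_conv q k l) l.
Proof.
  unfold renewal. apply sumN_ok. apply lim_ser.
  apply (is_lim_seq_incr_n _ l).
  apply (is_lim_seq_ext (fun _ => sum_f_R0 (fun k => ladder_conv q k l) l)).
  - intro n. symmetry. apply sum_tail_zero. intros; apply conv_zero; auto.
  - apply is_lim_seq_const.
Qed.

Lemma renewal_0 q : renewal q 0 = 1.
Proof. rewrite renewal_fin. simpl. auto. Qed.

Lemma sum_swap (F : nat -> nat -> R) n m :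
  sum_f_R0 (fun k => sum_f_R0 (fun l => F k l) m) n = sum_f_R0 (fun l => sum_f_R0 (fun k => F k l) n) m.
Proof.
  rewrite <- !fsum_sum.
  rewrite (fsum_ext (fun k => sum_f_R0 _ m) (fun k => fsum (fun l => F k l) (S m)))
    by (intros; symmetry; apply fsum_sum).
  rewrite (fsum_ext (fun l => sum_f_R0 _ n) (fun l => fsum (fun k => F k l) (S n)))
    by (intros; symmetry; apply fsum_sum).
  apply fsum_swap.
Qed.

Lemma renewal_S q k : renewal q (S k) =
  sum_f_R0 (fun m => ladder_height q m * renewal q (S k - m)) (S k).
Proof.
  rewrite renewal_fin. rewrite decomp_sum by lia. simpl pred.
  replace (ladder_conv q 0 (S k)) with 0 by reflexivity. rewrite Rplus_0_l.
  cbn [ladder_conv].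
  rewrite sum_swap. apply sum_eq. intros m Hm.
  rewrite (sum_eq _ (fun j => ladder_conv q j (S k - m) * ladder_height q m)) by (intros; ring).
  rewrite <- scal_sum. destruct m.
  - simpl ladder_height. ring.
  - f_equal. rewrite renewal_fin.
    replace k with ((k - (S k - S m)) + (S k - S m))%nat at 1 by lia.
    apply sum_tail_zero. intros; apply conv_zero; lia.
Qed.

Lemma renew_sol q : (forall j, 0 <= q j) -> hsZ q 1 -> forall i : nat,
  min_prob q (Z.of_nat i) = min_prob q 0 * sum_f_R0 (renewal q) i.
Proof.
  intros H0 H1.
  set (m := fun i : nat => min_prob q (Z.of_nat i)).
  set (a := ladder_height q).
  assert (a0 : a O = 0) by reflexivity.
  assert (R : forall i, m i = m O + sum_f_R0 (fun l => a l * m (i - l)%nat) i).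
  { intro i. unfold m. rewrite renew_eq; auto. simpl Z.of_nat at 2. f_equal.
    rewrite <- fsum_sum, fsum_shift. rewrite a0, Rmult_0_l, Rplus_0_l.
    apply fsum_ext. intros l Hl. unfold a. f_equal. f_equal. rewrite Nat2Z.inj_sub; lia. }
  set (D := fun i => match i with O => m O | S k => m (S k) - m k end).
  assert (DR : forall k, D (S k) = sum_f_R0 (fun l => a l * D (S k - l)%nat) (S k)).
  { intro k. simpl D at 1. rewrite (R (S k)), (R k). rewrite !tech5. rewrite Nat.sub_diag.
    rewrite (sum_eq (fun l => a l * D (S k - l)%nat) (fun l => a l * m (S k - l)%nat - a l * m (k - l)%nat)).
    - rewrite minus_sum. simpl D. ring.
    - intros l Hl. rewrite Nat.sub_succ_l by lia. simpl D. ring. }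
  assert (Dsol : forall i, D i = m O * renewal q i).
  { intro i. induction i as [i IH] using (well_founded_induction lt_wf). destruct i.
    - simpl D. rewrite renewal_0. ring.
    - rewrite DR, renewal_S. rewrite scal_sum. apply sum_eq. intros l Hl. destruct l.
      + fold a. rewrite a0. ring.
      + rewrite IH by lia. fold a. ring. }
  assert (Dsum : forall i, m i = sum_f_R0 D i).
  { induction i; simpl; auto. rewrite <- IHi. ring. }
  intro i. change (m i = m O * sum_f_R0 (renewal q) i). rewrite Dsum, scal_sum.
  apply sum_eq. intros; rewrite Dsol; ring.
Qed.

Lemma fp_tilt p beta : forall n x l, first_passage (tilt beta p) n x l =
  exp (- beta * (IZR l + IZR x)) * first_passage p n x l.
Proof.
  induction n; intros x l.
  - cbn [first_passage]. destruct (Z.eqb_spec x (- l)); [|ring].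
    subst x. rewrite opp_IZR. replace (- beta * (IZR l + - IZR l)) with 0 by ring.
    rewrite exp_0. ring.
  - destruct (Z.leb_spec 0 x).
    + rewrite !fp_S; auto. rewrite <- sumZ_scal. apply sumZ_ext. intro j.
      rewrite IHn. unfold tilt. rewrite plus_IZR.
      replace (- beta * (IZR l + (IZR x + IZR j))) with (- beta * (IZR l + IZR x) + - (beta * IZR j)) by ring.
      rewrite exp_plus, exp_Ropp. field. apply Rgt_not_eq, exp_pos.
    + rewrite !fp_neg; auto. ring.
Qed.

Lemma ladder_tilt p beta L : ladder_height (tilt beta p) L = exp (- beta * INR L) * ladder_height p L.
Proof.
  destruct L; [simpl; ring|]. unfold ladder_height. rewrite <- sumN_scal.
  f_equal. apply functional_extensionality. intro n. rewrite fp_tilt.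
  rewrite INR_IZR_INZ. simpl (IZR 0). rewrite Rplus_0_r. reflexivity.
Qed.

Lemma conv_tilt p beta : forall k l, ladder_conv (tilt beta p) k l = exp (- beta * INR l) * ladder_conv p k l.
Proof.
  induction k; intro l.
  - simpl. destruct (Nat.eqb_spec l 0); [|ring]. subst. simpl. rewrite Rmult_0_r, exp_0. ring.
  - cbn [ladder_conv]. rewrite scal_sum. apply sum_eq. intros m Hm.
    rewrite ladder_tilt, IHk, minus_INR by lia.
    replace (- beta * INR l) with (- beta * INR m + - beta * (INR l - INR m)) by ring.
    rewrite exp_plus. ring.
Qed.

Lemma renewal_tilt p beta l : renewal (tilt beta p) l = exp (- beta * INR l) * renewal p l.
Proof.
  unfold renewal. rewrite <- sumN_scal. f_equal. apply functional_extensionality. intro k.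
  apply conv_tilt.
Qed.

Lemma ser_decr1 (a : nat -> R) (l : R) : is_series (fun k => a (S k)) l -> is_series a (l + a O).
Proof. intro H. apply is_series_decr_1.
  match goal with |- is_series _ ?x => replace x with l; [exact H|] end.
  unfold plus, opp; simpl. ring. Qed.
Lemma ser_incr1 (a : nat -> R) (l : R) : is_series a l -> is_series (fun k => a (S k)) (l - a O).
Proof. intro H. apply is_series_incr_1.
  match goal with |- is_series _ ?x => replace x with l; [exact H|] end.
  unfold plus; simpl. ring. Qed.

Lemma shift1 (g : Z -> R) s : hsZ g s -> hsZ (fun k => g (k - 1)%Z) s.
Proof.
  intros [a [b [Ha [Hb E]]]].
  exists (a + g (-1)%Z), (b - g (-1)%Z). split; [|split].
  - apply (ser_decr1 (fun n => g (Z.of_nat n - 1)%Z)).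
    apply (is_series_ext (fun n => g (Z.of_nat n))); auto.
    intro n. f_equal. rewrite Nat2Z.inj_succ. lia.
  - apply (ser_incr1 (fun n => g (- Z.of_nat (S n))%Z)) in Hb.
    apply (is_series_ext (fun k => g (- Z.of_nat (S (S k)))%Z)); [|exact Hb].
    intro n. f_equal. rewrite !Nat2Z.inj_succ. lia.
  - rewrite E; ring.
Qed.

Lemma ser_all_zero (a : nat -> R) b : (forall n, a n = 0) -> is_series a b -> b = 0.
Proof.
  intros H Hb. apply is_series_unique in Hb. rewrite <- Hb.
  apply is_series_unique. apply (is_series_ext (fun _ => 0)); auto. apply ser_zero.
Qed.

Lemma shift_ser i : forall (g : Z -> R) s, hsZ g s ->
  (forall k, (k < - Z.of_nat i)%Z -> g k = 0) ->
  is_series (fun j : nat => g (Z.of_nat j - Z.of_nat i)%Z) s.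
Proof.
  induction i; intros g s H Z0.
  - destruct H as [a [b [Ha [Hb E]]]].
    assert (b = 0) by (apply (ser_all_zero (fun n => g (- Z.of_nat (S n))%Z) b); auto; intro; apply Z0; lia).
    subst. rewrite Rplus_0_r. apply (is_series_ext (fun n => g (Z.of_nat n))); auto.
    intro; f_equal; lia.
  - apply shift1 in H. specialize (IHi _ _ H).
    apply (is_series_ext (fun j => g (Z.of_nat j - Z.of_nat i - 1)%Z)).
    + intro; f_equal; lia.
    + apply IHi. intros; apply Z0; lia.
Qed.

Lemma part_le (a : nat -> R) l J : (forall n, 0 <= a n) -> is_series a l -> sum_f_R0 a J <= l.
Proof.
  intros H0 H. apply ser_lim in H.
  apply (is_lim_seq_incr_n _ J) in H.
  apply (is_lim_seq_le (fun _ => sum_f_R0 a J) (fun n => sum_f_R0 a (n + J)) (sum_f_R0 a J) l);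
    auto; [|apply is_lim_seq_const].
  intro n. induction n; simpl; [lra|]. specialize (H0 (S (n + J))). lra.
Qed.

Lemma mono_lim (c : nat -> R) (s : nat -> nat -> R) (mm : nat -> R) (C : R) (SS : nat -> R) (Sl : R) :
  (forall j, 0 <= c j) -> is_series c C -> (forall N j, 0 <= s N j <= 1) ->
  (forall N j, s (S N) j <= s N j) -> (forall j, is_lim_seq (fun N => s N j) (mm j)) ->
  (forall N, is_series (fun j => c j * s N j) (SS N)) -> is_lim_seq SS Sl ->
  is_series (fun j => c j * mm j) Sl.
Proof.
  intros c0 Hc s01 sdec Hm HS HSl.
  assert (mle : forall N j, mm j <= s N j).
  { intros N j. apply (is_lim_seq_decr_compare (fun N => s N j)); auto. }
  assert (m01 : forall j, 0 <= mm j <= 1).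
  { intro j. split.
    - apply (is_lim_seq_le (fun _ => 0) (fun N => s N j) 0 (mm j)); auto.
      intro; apply s01. apply is_lim_seq_const.
    - specialize (mle O j). specialize (s01 O j). lra. }
  assert (Ex : ex_series (fun j => c j * mm j)).
  { apply (ex_bnd c mm 1); auto. exists C; auto. intro j. rewrite Rabs_pos_eq; apply m01. }
  apply Series_correct in Ex. set (T := Series (fun j => c j * mm j)) in *.
  replace Sl with T; auto.
  apply Rle_antisym.
  - apply (is_lim_seq_le (fun _ => T) SS T Sl); auto; [|apply is_lim_seq_const].
    intro N. apply (ser_le (fun j => c j * mm j) (fun j => c j * s N j)); auto.
    intro j. apply Rmult_le_compat_l; auto.
  - assert (HJ : forall J, Sl <= C - sum_f_R0 c J + T).
    { intro J.
      assert (HN : forall N, SS N <= C - sum_f_R0 (fun j => c j * (1 - s N j)) J).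
      { intro N.
        assert (HD := is_series_plus _ _ _ _ Hc (is_series_scal_l (-1) _ _ (HS N))).
        assert (P := part_le (fun j => c j + -1 * (c j * s N j)) _ J
                 ltac:(intro n; specialize (s01 N n); specialize (c0 n); simpl; nra) HD).
        change (plus C (scal (-1) (SS N))) with (C + -1 * SS N) in P.
        rewrite (sum_eq _ (fun j => c j + -1 * (c j * s N j))). lra.
        intros; ring. }
      apply (is_lim_seq_le SS (fun N => C - sum_f_R0 (fun j => c j * (1 - s N j)) J) Sl
               (C - sum_f_R0 (fun j => c j * (1 - mm j)) J)) in HN; auto.
      + simpl in HN. assert (sum_f_R0 (fun j => c j * mm j) J <= T) by
          (apply part_le; auto; intro n; specialize (c0 n); specialize (m01 n); nra).
        rewrite (sum_eq _ (fun j => c j - c j * mm j)) in HN by (intros; ring).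
        rewrite minus_sum in HN. lra.
      + apply is_lim_seq_minus'. apply is_lim_seq_const.
        apply (is_lim_seq_ext (fun N => fsum (fun j => c j * (1 - s N j)) (S J))).
        { intro; apply fsum_sum. }
        rewrite <- fsum_sum.
        apply (lim_fsum (fun j N => c j * (1 - s N j)) (fun j => c j * (1 - mm j))).
        intro j. apply (is_lim_seq_scal_l (fun N => 1 - s N j) (c j) (1 - mm j)).
        apply is_lim_seq_minus'; auto. apply is_lim_seq_const.
    }
    apply (is_lim_seq_le (fun _ => Sl) (fun J => C - sum_f_R0 c J + T) Sl T); auto.
    + apply is_lim_seq_const.
    + assert (L : is_lim_seq (fun J => C - sum_f_R0 c J + T) (C - C + T)).
      { apply is_lim_seq_plus'; [|apply is_lim_seq_const].
        apply is_lim_seq_minus'; [apply is_lim_seq_const|]. apply ser_lim; auto. }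
      replace (C - C + T) with T in L by ring. exact L.
Qed.

Lemma harm q : (forall j, 0 <= q j) -> hsZ q 1 -> forall i : nat,
  is_series (fun j : nat => q (Z.of_nat j - Z.of_nat i)%Z * min_prob q (Z.of_nat j)) (min_prob q (Z.of_nat i)).
Proof.
  intros H0 H1 i.
  assert (HS : forall N, is_series (fun j : nat => q (Z.of_nat j - Z.of_nat i)%Z * stay q N (Z.of_nat j))
                                  (sumZ (fun k => q k * stay q N (Z.of_nat i + k)))).
  { intro N.
    apply (is_series_ext (fun j : nat => (fun k => q k * stay q N (Z.of_nat i + k)) (Z.of_nat j - Z.of_nat i)%Z)).
    - intro j. cbv beta. do 2 f_equal. lia.
    - apply (shift_ser i (fun k => q k * stay q N (Z.of_nat i + k))). apply stay_hs; auto.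
      intros k Hk. rewrite stay_neg by lia. ring. }
  apply (mono_lim (fun j => q (Z.of_nat j - Z.of_nat i)%Z) (fun N j => stay q N (Z.of_nat j))
           (fun j => min_prob q (Z.of_nat j)) (sumZ (fun k => q k * stay q 0 (Z.of_nat i + k)))
           (fun N => stay q (S N) (Z.of_nat i))).
  - intro; auto.
  - refine (is_series_ext _ _ _ _ (HS O)). intro j. rewrite stay_0 by lia. apply Rmult_1_r.
  - intros; apply stay_01; auto.
  - intros; apply stay_dec; auto.
  - intro; apply min_prob_lim; auto.
  - intro N. rewrite stay_S by lia. apply HS.
  - apply (is_lim_seq_incr_1 (fun N => stay q N (Z.of_nat i))). apply min_prob_lim; auto.
Qed.

Theorem mainTheorem9 (p : Z -> R) (beta : R)
  (Hp : is_pmf p) (Hmean : mean_negative p) (Hbeta : 0 < beta)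
  (Hcramer : has_sumZ (tilt beta p) 1) :
  (forall i : nat,
      infinite_sum (fun j : nat => p (Z.of_nat j - Z.of_nat i)%Z * fbeta beta p j)
                   (fbeta beta p i)) /\
  (forall i : nat,
      exp (beta * INR i) - exp (- beta) <= fbeta beta p i <= exp (beta * INR i)) /\
  (forall i : nat,
      fbeta beta p i =
      tau_inf_prob (tilt beta p) *
      sum_f_R0 (fun j => exp (beta * (INR i - INR j)) * renewal p j) i).
Proof.
  destruct Hp as [P0 P1]. apply hsZ_iff in P1. apply hsZ_iff in Hcramer.
  set (q := tilt beta p) in *.
  assert (Q0 : forall j, 0 <= q j).
  { intro j. unfold q, tilt. apply Rmult_le_pos; auto. left; apply exp_pos. }
  unfold fbeta. fold q.
  split; [|split].
  - intro i. apply (proj1 (is_series_Reals _ _)).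
    assert (H := is_series_scal_l (exp (beta * INR i)) _ _ (harm q Q0 Hcramer i)).
    assert (E : forall j : nat, exp (beta * INR i) * (q (Z.of_nat j - Z.of_nat i)%Z * min_prob q (Z.of_nat j))
      = p (Z.of_nat j - Z.of_nat i)%Z * (exp (beta * INR j) * min_prob q (Z.of_nat j))).
    { intro j. unfold q, tilt. rewrite minus_IZR, <- !INR_IZR_INZ.
      replace (beta * INR j) with (beta * INR i + beta * (INR j - INR i)) by ring.
      rewrite exp_plus. ring. }
    exact (is_series_ext _ _ _ E H).
  - intro i. destruct (min_prob_01 q Q0 Hcramer (Z.of_nat i)).
    assert (Hlow : 1 - exp (- beta * (INR i + 1)) <= min_prob q (Z.of_nat i)).
    { apply (is_lim_seq_le (fun _ => 1 - exp (- beta * (INR i + 1))) (fun N => stay q N (Z.of_nat i)) (1 - exp (- beta * (INR i + 1))) (min_prob q (Z.of_nat i))).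
      - intro N. assert (E := exit_bound p beta P0 P1 Hbeta Hcramer N (Z.of_nat i)).
        rewrite <- INR_IZR_INZ in E. fold q in E. lra.
      - apply is_lim_seq_const.
      - apply min_prob_lim; auto. }
    assert (Ep : 0 < exp (beta * INR i)) by apply exp_pos.
    split; [|nra].
    replace (exp (- beta)) with (exp (beta * INR i) * exp (- beta * (INR i + 1))).
    + nra.
    + rewrite <- exp_plus. f_equal. ring.
  - intro i. rewrite (renew_sol q Q0 Hcramer i). unfold tau_inf_prob.
    rewrite Rmult_comm, Rmult_assoc. f_equal.
    rewrite Rmult_comm, scal_sum. apply sum_eq. intros j _.
    unfold q. rewrite renewal_tilt.
    replace (beta * (INR i - INR j)) with (beta * INR i + - beta * INR j) by ring.
    rewrite exp_plus. ring.
Qed.
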